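(* Suppose $R=DV$ is obtained by the lazy reduction, and let $\omega*\sigma,\omega*\tau$ ($\sigma,\tau\in K$) be a persistence pair, $\operatorname{low}R[\omega*\tau]=\omega*\sigma$. Then every simplex with nonzero coefficient in $V[\omega*\tau]$ is a cone simplex or $\omega$ (no base simplex of $K$ occurs in $V[\omega*\tau]$). Consequently the chain $z=(\partial(V[\omega*\tau]\cap(\omega*K\setminus K)))\cap K$ equals $R[\omega*\tau]\cap K$, the restriction of $R[\omega*\tau]$ to base simplices.
   Context: Coefficients are in a field $\mathbb F$. Let $K$ be a finite $\Delta$-complex in which every simplex $\sigma$ carries an integer interval $T(\sigma)=[\min\sigma,\max\sigma]$ with $\min\sigma<\max\sigma$, such that whenever $\sigma$ is a proper face of $\tau$, $\min\sigma<\min\tau<\max\tau<\max\sigma$; assume the values $\min\sigma$ ($\sigma\in K$) are pairwise distinct and the values $\max\sigma$ are pairwise distinct. The cone $\omega*K$ consists of the simplices of $K$ (''base simplices''), a new vertex $\omega$, and simplices $\omega*\sigma$ for $\sigma\in K$ (''cone simplices''), with $\partial(\omega*\sigma)=\sigma-\omega*\partial\sigma$ (for a vertex $v$, $\partial(\omega*v)=v-\omega$). The cone filtration orders base simplices by increasing $\min$, then $\omega$, then the simplices $\omega*\sigma$ by decreasing $\max\sigma$. $D$ is the boundary matrix of $\omega*K$ with rows and columns in this order. For a nonzero column $c$, $\operatorname{low}c$ is its lowest nonzero entry's index. The lazy reduction is the standard column algorithm: start with $R=D$, $V=I$; process columns left to right, and while the current column $R[j]$ is nonzero and some earlier column $R[i]$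 has $\operatorname{low}R[i]=\operatorname{low}R[j]$, replace $R[j]\leftarrow R[j]-cR[i]$, $V[j]\leftarrow V[j]-cV[i]$ with $c$ cancelling the pivot. It yields $R=DV$ with $V$ invertible upper-triangular and $R$ reduced. For a chain $c$ and set of simplices $L$, $c\cap L$ is the restriction of $c$ to simplices in $L$. *)

(* Defs.v *)
From HB Require Import structures.
From mathcomp Require Import all_boot all_order all_algebra.
Set Implicit Arguments. Unset Strict Implicit. Unset Printing Implicit Defensive.
Import Order.TTheory GRing.Theory Num.Theory.

(* ---------- Finite Delta-complexes ----------
   The simplices of K are indexed by 'I_n.  [dim s] is the dimension of s and
   [face s i] (for 0 < dim s, i <= dim s) is its i-th face d_i s. *)

Definition is_delta_complex n (dim : 'I_n -> nat) (face : 'I_n -> nat -> 'I_n) :=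
  (forall s i, (0 < dim s)%N -> (i <= dim s)%N -> dim (face s i) = (dim s).-1) /\
  (forall s i j, (1 < dim s)%N -> (i < j)%N -> (j <= dim s)%N ->
     face (face s j) i = face (face s i) j.-1).

Definition imm_face n (dim : 'I_n -> nat) (face : 'I_n -> nat -> 'I_n) : rel 'I_n :=
  fun u t => (0 < dim t)%N && [exists i : 'I_(dim t).+1, face t i == u].

Definition proper_face n dim face (s t : 'I_n) : bool :=
  [exists u, imm_face dim face u t && connect (imm_face dim face) s u].

(* the interval hypotheses T(s) = [mn s, mx s] *)
Definition interval_filtered n dim face (mn mx : 'I_n -> int) :=
  [/\ (forall s, (mn s < mx s)%R),
      injective mn, injective mx &
      (forall s t, proper_face dim face s t ->
         (mn s < mn t)%R /\ (mn t < mx t)%R /\ (mx t < mx s)%R)].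

Definition cs n := (('I_n + unit) + 'I_n)%type.
Definition Base n (s : 'I_n) : cs n := inl (inl s).
Definition Om n : cs n := inl (inr tt).
Definition Cone n (s : 'I_n) : cs n := inr s.
Definition is_base n (x : cs n) : bool :=
  match x with inl (inl _) => true | _ => false end.

Section Cone.
Variables (F : fieldType) (n : nat) (dim : 'I_n -> nat)
          (face : 'I_n -> nat -> 'I_n) (mn mx : 'I_n -> int).
Local Open Scope ring_scope.

Definition bdK (t s : 'I_n) : F :=
  if dim s == 0%N then 0
  else \sum_(i < (dim s).+1 | face s i == t) (-1) ^+ i.

(* cbd a b = coefficient of a in the boundary of b, in omega * K:
   d(omega) = 0, d(omega*v) = v - omega, d(omega*s) = s - omega*(d s). *)
Definition cbd (a b : cs n) : F :=
  match b with
  | inl (inl s) => match a with inl (inl t) => bdK t s | _ => 0 end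
  | inl (inr _) => 0
  | inr s =>
      match a with
      | inl (inl t) => (t == s)%:R
      | inl (inr _) => if dim s == 0%N then -1 else 0
      | inr t => if dim s == 0%N then 0 else - bdK t s
      end
  end.

Definition N := (n + n).+1.

(* position in the cone filtration: base simplices by increasing mn,
   then omega, then cone simplices by decreasing mx *)
Definition cpos (x : cs n) : 'I_N :=
  match x with
  | inl (inl s) => inord #|[pred t | mn t < mn s]|
  | inl (inr _) => inord n
  | inr s => inord (n.+1 + #|[pred t | mx s < mx t]|)
  end.

Definition cunpos (i : 'I_N) : cs n := odflt (Om n) [pick x | cpos x == i].

Definition coneD : 'M[F]_N := \matrix_(i, j) cbd (cunpos i) (cunpos j).

End Cone.

Section Reduction.
Variables (F : fieldType) (m : nat).
Local Open Scope ring_scope.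

Definition low (c : 'cV[F]_m) : option 'I_m :=
  [pick i | (c i 0 != 0) && [forall k : 'I_m, (i < k)%N ==> (c k 0 == 0)]].

Definition red_step (j : 'I_m) (RV : 'M[F]_m * 'M[F]_m) : 'M[F]_m * 'M[F]_m :=
  let: (R, V) := RV in
  match low (col j R) with
  | None => RV
  | Some l =>
    match [pick i : 'I_m | (i < j)%N && (low (col i R) == Some l)] with
    | None => RV
    | Some i =>
      let c := R l j / R l i in
      (\matrix_(a, b) (if b == j then R a j - c * R a i else R a b),
       \matrix_(a, b) (if b == j then V a j - c * V a i else V a b))
    end
  end.

(* each effective step strictly lowers low R[j] or zeroes R[j], so m
   iterations reach the fixed point of the while loop *)
Definition reduce_col (j : 'I_m) RV := iter m (red_step j) RV.

Definition lazy_reduction (D : 'M[F]_m) : 'M[F]_m * 'M[F]_m :=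
  foldl (fun RV j => reduce_col j RV) (D, 1%:M) (enum 'I_m).

End Reduction.

(* Main.v *)
Require Import Defs.
From HB Require Import structures.
From mathcomp Require Import all_boot all_order all_algebra.
From mathcomp Require Import zify.
Import Order.TTheory GRing.Theory Num.Theory.
Set Implicit Arguments. Unset Strict Implicit.
Local Open Scope ring_scope.

Section Gen.
Variables (F : fieldType) (m : nat).

Lemma lowP (c : 'cV[F]_m) l : low c = Some l ->
  c l 0 != 0 /\ forall k : 'I_m, (l < k)%N -> c k 0 = 0.
Proof.
rewrite /low; case: pickP => // x /andP[nz /forallP H] [<-]; split => // k lk.
by apply/eqP; move: (H k); rewrite lk.
Qed.

Lemma lazy_ind (P : 'M[F]_m * 'M[F]_m -> Prop) D :
  (forall j RV, P RV -> P (red_step j RV)) -> P (D, 1%:M) ->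
  P (lazy_reduction D).
Proof.
move=> Hs H0; rewrite /lazy_reduction; elim: (enum _) (D, 1%:M) H0 => //= j s IH RV HRV.
apply: IH; rewrite /reduce_col.
have H : forall k RV', P RV' -> P (iter k (red_step j) RV') by elim=> //= k IHk RV' H; exact: Hs (IHk _ H).
exact: H.
Qed.

Definition Jinv (t : nat) (RV : 'M[F]_m * 'M[F]_m) :=
  forall i : 'I_m, forall l, low (col i RV.1) = Some l -> (t < l)%N ->
  forall k : 'I_m, (k < t)%N -> RV.2 k i = 0.

Lemma Jinv_step t j RV : Jinv t RV -> Jinv t (red_step j RV).
Proof.
case: RV => R V /= HJ; rewrite /red_step.
case El: (low (col j R)) => [l|] //; case: pickP => [i /andP[_ /eqP Ei]|] //.
have [nzj zj] := lowP El; have [nzi zi] := lowP Ei.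
rewrite !mxE in nzj nzi.
move=> i' l' /=; case: (eqVneq i' j) => [->|ne] El'; last first.
  move=> tl k kt; rewrite mxE (negbTE ne); apply: (HJ i' l') => //.
  by rewrite -El'; congr low; apply/matrixP => a b; rewrite !mxE (negbTE ne).
move=> tl' k kt; rewrite mxE eqxx.
have l'l : (l' < l)%N.
  have [nz' _] := lowP El'; rewrite !mxE eqxx in nz'.
  rewrite ltnNge; apply/negP => ll'.
  move: ll' nz'; case: (ltngtP l l') => // [ll2|e] _.
    by move: (zj l' ll2) (zi l' ll2); rewrite !mxE => -> ->; rewrite mulr0 subr0 eqxx.
  have -> : l' = l by apply: val_inj.
  by rewrite divfK // subrr eqxx.
have tl : (t < l)%N by apply: ltn_trans l'l.
by rewrite (HJ j l El tl k kt) (HJ i l Ei tl k kt) mulr0 subr0.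
Qed.

Lemma RDV_step_ (D : 'M[F]_m) j (RV : 'M[F]_m * 'M[F]_m) : RV.1 = D *m RV.2 -> (red_step j RV).1 = D *m (red_step j RV).2.
Proof.
case: RV => R V /= HR; rewrite /red_step.
case El: (low (col j R)) => [l|] //; case: pickP => [i _|] //=.
set c := _ / _.
apply/matrixP => a b; rewrite !mxE; case: eqP => [->|/eqP nb].
  rewrite HR !mxE mulr_sumr -sumrB; apply: eq_bigr => k _.
  by rewrite mxE eqxx mulrBr mulrCA.
by rewrite HR !mxE; apply: eq_bigr => k _; rewrite mxE (negbTE nb).
Qed.
End Gen.

Section ConeL.
Variables (F : fieldType) (n : nat) (dim : 'I_n -> nat)
          (face : 'I_n -> nat -> 'I_n) (mn mx : 'I_n -> int).

Lemma card_pred_lt (P : pred 'I_n) s : ~~ P s -> (#|P| < n)%N.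
Proof.
move=> Ps; have : (#|P| <= #|predC1 s|)%N.
  apply: subset_leq_card; apply/subsetP => t Pt; rewrite !inE.
  by apply/eqP => ets; move/negP: Ps; apply; rewrite -ets; exact: Pt.
rewrite cardC1 card_ord; have := ltn_ord s; lia.
Qed.

Lemma cardB s : (#|[pred t | (mn t < mn s)%R]| < n)%N.
Proof. by apply: (card_pred_lt (s := s)); rewrite inE ltxx. Qed.
Lemma cardC s : (#|[pred t | (mx s < mx t)%R]| < n)%N.
Proof. by apply: (card_pred_lt (s := s)); rewrite inE ltxx. Qed.

Definition posv (x : cs n) : nat :=
  match x with
  | inl (inl s) => #|[pred t | mn t < mn s]|
  | inl (inr _) => n
  | inr s => n.+1 + #|[pred t | mx s < mx t]|
  end.

Lemma cpos_val x : val (cpos mn mx x) = posv x.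
Proof.
case: x => [[s|[]]|s] /=; rewrite inordK // /N.
- by have := cardB s; lia.
- lia.
- by have := cardC s; lia.
Qed.

Lemma card_lt_inj (f : 'I_n -> int) : injective f -> forall s s',
  #|[pred t | f t < f s]| = #|[pred t | f t < f s']| -> s = s'.
Proof.
move=> injf.
have key : forall s s', f s < f s' -> (#|[pred t | (f t < f s)%R]| < #|[pred t | (f t < f s')%R]|)%N.
  move=> s s' lt; apply: proper_card; apply/properP; split.
    by apply/subsetP => t; rewrite !inE => h; apply: lt_trans h lt.
  by exists s; rewrite !inE ?ltxx.
move=> s s' E; case: (ltgtP (f s) (f s')) => [h|h|h]; last exact: injf.
  by move: (key _ _ h); rewrite E ltnn.
by move: (key _ _ h); rewrite E ltnn.
Qed.

Hypothesis injmn : injective mn.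
Hypothesis injmx : injective mx.

Lemma cpos_inj : injective (cpos mn mx).
Proof.
move=> x y /(congr1 val); rewrite !cpos_val.
case: x => [[s|[]]|s]; case: y => [[t|[]]|t] //= E.
- by rewrite (card_lt_inj injmn E).
- by have := cardB s; lia.
- by have := cardB s; lia.
- by have := cardB t; lia.
- lia.
- by have := cardB t; lia.
- lia.
- have E' : #|[pred u | (mx t < mx u)%R]| = #|[pred u | (mx s < mx u)%R]| by lia.
  have inj' : injective (fun u => - mx u) by move=> u v /oppr_inj /injmx.
  congr inr; apply: (card_lt_inj inj').
  have C : forall w, #|[pred u | (- mx u < - mx w)%R]| = #|[pred u | (mx w < mx u)%R]|.
    by move=> w; apply: eq_card => u; rewrite !inE ltrN2.
  by rewrite !C E'.
Qed.

Lemma cunposK x : cunpos mn mx (cpos mn mx x) = x.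
Proof.
rewrite /cunpos; case: pickP => [y /eqP /cpos_inj -> //|/(_ x)].
by rewrite eqxx.
Qed.

End ConeL.

Lemma coneD_base (F : fieldType) (n : nat) (dim : 'I_n -> nat)
  (face : 'I_n -> nat -> 'I_n) (mn mx : 'I_n -> int) (k i : 'I_(N n)) :
  (i < n)%N -> coneD F dim face mn mx k i != 0 -> (k < n)%N.
Proof.
move=> iN; rewrite mxE.
have := erefl (cunpos mn mx i); rewrite {2}/cunpos.
case: pickP => [x /eqP Hx|_] /= ->; last first.
  by case: (cunpos mn mx k) => [[]|] //=; rewrite eqxx.
move: iN; rewrite -Hx cpos_val; case: x {Hx} => [[s|[]]|s] /=; [|lia|lia].
move=> _.
have := erefl (cunpos mn mx k); rewrite {2}/cunpos.
case: pickP => [y /eqP Hy|_] /= ->; last by rewrite /= eqxx.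
rewrite -Hy cpos_val; case: y {Hy} => [[t|[]]|t] /=; rewrite ?eqxx // => _.
exact: cardB.
Qed.

Lemma Jinit (F : fieldType) (n : nat) (dim : 'I_n -> nat)
  (face : 'I_n -> nat -> 'I_n) (mn mx : 'I_n -> int) :
  Jinv n (coneD F dim face mn mx, 1%:M).
Proof.
move=> i l /= El nl k kn; rewrite mxE.
case: (ltnP i n) => [iN|ni].
  have [nz _] := lowP El; rewrite mxE in nz.
  by have := coneD_base iN nz; lia.
by case: eqP => // eki; move: kn ni; rewrite eki; lia.
Qed.

Theorem mainTheorem7 (F : fieldType) (n : nat) (dim : 'I_n -> nat)
  (face : 'I_n -> nat -> 'I_n) (mn mx : 'I_n -> int) :
  is_delta_complex dim face ->
  interval_filtered dim face mn mx ->
  forall sigma tau : 'I_n,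
  let RV := lazy_reduction (coneD F dim face mn mx) in
  let R := RV.1 in
  let V := RV.2 in
  let j := cpos mn mx (Cone tau) in
  low (col j R) = Some (cpos mn mx (Cone sigma)) ->
  (forall x : cs n, V (cpos mn mx x) j != 0 -> ~~ is_base x) /\
  (forall b : 'I_n,
     \sum_(x : cs n | ~~ is_base x)
        cbd F dim face (Base b) x * V (cpos mn mx x) j
     = R (cpos mn mx (Base b)) j).
Proof.
move=> _ [_ injmn injmx _] sigma tau RV R V j Hlow.
have HJ : Jinv n RV.
  apply: (lazy_ind (P := Jinv n)); [exact: Jinv_step | exact: Jinit].
have HR : R = coneD F dim face mn mx *m V.
  apply: (lazy_ind (P := fun RV => RV.1 = coneD F dim face mn mx *m RV.2)).
    by move=> j' RV' H; apply: RDV_step_.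
  by rewrite /= mulmx1.
have P1 : forall x : cs n, V (cpos mn mx x) j != 0 -> ~~ is_base x.
  case=> [[s|[]]|s] // nz; exfalso; move/eqP: nz; apply.
  apply: (HJ j _ Hlow); first by rewrite cpos_val /=; lia.
  by rewrite cpos_val; exact: cardB.
split=> // b.
rewrite HR mxE (reindex (cpos mn mx)); last first.
  apply: onW_bij; apply: inj_card_bij; first exact: cpos_inj.
  by rewrite /cs !card_sum card_unit !card_ord /N; lia.
symmetry; rewrite (bigID (@is_base n)) big1 ?Monoid.simpm.
  by apply: eq_bigr => x _; rewrite mxE !cunposK.
move=> x /andP[_ xb]; have : V (cpos mn mx x) j = 0.
  by apply/eqP; apply: contraTT xb => /P1.
by move=> ->; rewrite mulr0.
Qed.
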